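(* Let $p\in(0,1)$ and let $\ell_p$ be the space of real sequences $(x_n)_{n=1}^\infty$ with $\sum_{n=1}^\infty|x_n|^p<\infty$, with its $p$-norm $\|x\|_p=\sum_{n=1}^\infty|x_n|^p$. Let $e_n=(0,\ldots,0,1,0,\ldots)$ (with $1$ in the $n$th place). Then for any infinite dimensional subspace $\mathcal{S}$ of $\ell_\infty$ properly containing $c_0$, there is no subset of $\ell_p$ that is $[(e_n)_{n=1}^\infty,\mathcal{S}]$-lineable.
   Context: $\ell_\infty$ is the space of bounded real sequences and $c_0$ the space of real sequences converging to $0$, viewed as subspaces of $\mathbb{R}^{\mathbb{N}}$. For a subspace $\mathcal{S}$ of $\mathbb{R}^{\mathbb{N}}$ and a sequence $(u_n)$ in a topological vector space $X$, a subset $A\subset X$ is $[(u_n)_{n=1}^\infty,\mathcal{S}]$-lineable if for each $(c_n)_{n=1}^\infty\in\mathcal{S}$ the series $\sum_{n=1}^\infty c_nu_n$ converges in $X$ to a vector of $A\cup\{0\}$. Here $\ell_p$ carries the topology induced by its $p$-norm. *)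

(* Defs.v *)
From Stdlib Require Import Reals.
From Coquelicot Require Import Coquelicot.
Open Scope R_scope.

(* Real sequences x : nat -> R; index 0 plays the role of the paper's index 1. *)
Definition seqR := nat -> R.

(* |t|^p with the convention 0^p = 0 (p > 0). *)
Definition pabs (p t : R) : R :=
  if Req_EM_T t 0 then 0 else Rpower (Rabs t) p.

Definition in_lp (p : R) (x : seqR) : Prop := ex_series (fun n => pabs p (x n)).

Definition lp_norm (p : R) (x : seqR) : R := Series (fun n => pabs p (x n)).
Definition lp_dist (p : R) (x y : seqR) : R := lp_norm p (fun n => x n - y n).

Definition in_linf (x : seqR) : Prop := exists M, forall n, Rabs (x n) <= M.
Definition in_c0 (x : seqR) : Prop := is_lim_seq x 0.

Definition unit_vec (n : nat) : seqR := fun k => if Nat.eqb k n then 1 else 0.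

Fixpoint lincomb (n : nat) (a : nat -> R) (v : nat -> seqR) : seqR :=
  match n with
  | O => fun _ => 0
  | S m => fun k => lincomb m a v k + a m * v m k
  end.

Definition is_subspace (S : seqR -> Prop) : Prop :=
  S (fun _ => 0) /\
  (forall x y, S x -> S y -> S (fun k => x k + y k)) /\
  (forall (c : R) x, S x -> S (fun k => c * x k)).

Definition infinite_dim (S : seqR -> Prop) : Prop :=
  forall n : nat, exists v : nat -> seqR,
    (forall i, (i < n)%nat -> S (v i)) /\
    (forall a : nat -> R, (forall k, lincomb n a v k = 0) ->
       forall i, (i < n)%nat -> a i = 0).

Definition series_cvg_lp (p : R) (c : seqR) (u : nat -> seqR) (x : seqR) : Prop :=
  in_lp p x /\ is_lim_seq (fun N => lp_dist p (lincomb N c u) x) 0.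

Definition lineable_lp (p : R) (u : nat -> seqR) (S : seqR -> Prop) (A : seqR -> Prop) : Prop :=
  forall c, S c -> exists x, (A x \/ x = (fun _ => 0)) /\ series_cvg_lp p c u x.

(* Main.v *)
Require Import Defs.
From Stdlib Require Import Reals.
From Coquelicot Require Import Coquelicot.
From Stdlib Require Import Lia Lra.
Open Scope R_scope.

Lemma lincomb_unit (N : nat) (c : seqR) (k : nat) :
  lincomb N c unit_vec k = if Nat.ltb k N then c k else 0.
Proof.
  induction N as [|m IH]; simpl.
  - destruct (Nat.ltb_spec k 0); [lia|reflexivity].
  - rewrite IH. unfold unit_vec.
    destruct (Nat.ltb_spec k m); destruct (Nat.ltb_spec k (S m));
    destruct (Nat.eqb_spec k m); subst; try lia; try ring.
Qed.

Lemma pabs_nonneg (p t : R) : 0 <= pabs p t.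
Proof.
  unfold pabs. destruct (Req_EM_T t 0). lra.
  unfold Rpower. left. apply exp_pos.
Qed.

Lemma pabs_zero (p t : R) : pabs p t = 0 -> t = 0.
Proof.
  unfold pabs. destruct (Req_EM_T t 0). auto.
  unfold Rpower. intro H. pose proof (exp_pos (p * ln (Rabs t))). lra.
Qed.

Lemma pabs_opp (p t : R) : pabs p (- t) = pabs p t.
Proof.
  unfold pabs. destruct (Req_EM_T (-t) 0); destruct (Req_EM_T t 0);
  try reflexivity; try (exfalso; lra).
  rewrite Rabs_Ropp. reflexivity.
Qed.

Lemma sum_n_bounds (a : nat -> R) : (forall n, 0 <= a n) ->
  forall k, 0 <= sum_n a k /\ a k <= sum_n a k.
Proof.
  intros Ha k. induction k as [|k IH].
  - rewrite sum_O. split; [apply Ha|lra].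
  - rewrite sum_Sn. destruct IH. pose proof (Ha (S k)).
    change plus with Rplus. simpl. split; lra.
Qed.

Lemma term_le_series (a : nat -> R) : (forall n, 0 <= a n) -> ex_series a ->
  forall k, a k <= Series a.
Proof.
  intros Ha Hex k.
  assert (H : is_lim_seq (sum_n a) (Series a)).
  { pose proof (Series_correct a Hex) as Hs. exact Hs. }
  eapply Rle_trans. apply (sum_n_bounds a Ha k).
  apply (is_lim_seq_incr_compare (sum_n a) (Series a) H).
  intro n. rewrite sum_Sn. change plus with Rplus. pose proof (Ha (S n)). simpl. lra.
Qed.

Lemma lp_lim0 (p : R) (y : seqR) : 0 < p -> in_lp p y -> is_lim_seq y 0.
Proof.
  intros Hp Hy. apply ex_series_lim_0 in Hy.
  apply is_lim_seq_spec. apply is_lim_seq_spec in Hy.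
  intro eps.
  assert (He : 0 < Rpower eps p) by (unfold Rpower; apply exp_pos).
  destruct (Hy (mkposreal _ He)) as [N HN]. exists N. intros n Hn.
  specialize (HN n Hn). simpl in HN. rewrite Rminus_0_r in HN |- *.
  rewrite Rabs_pos_eq in HN by apply pabs_nonneg.
  unfold pabs in HN. destruct (Req_EM_T (y n) 0) as [E|E].
  - rewrite E, Rabs_R0. apply cond_pos.
  - destruct (Rlt_or_le (Rabs (y n)) eps) as [L|L]; auto.
    exfalso. assert (Rpower eps p <= Rpower (Rabs (y n)) p).
    { apply Rle_Rpower_l. lra. split. apply cond_pos. exact L. }
    lra.
Qed.

Theorem mainTheorem4 (p : R) (S : seqR -> Prop) :
  0 < p < 1 ->
  is_subspace S ->
  (forall x, S x -> in_linf x) ->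
  infinite_dim S ->
  (forall x, in_c0 x -> S x) ->
  (exists x, S x /\ ~ in_c0 x) ->
  forall A : seqR -> Prop,
    (forall x, A x -> in_lp p x) ->
    ~ lineable_lp p unit_vec S A.
Proof.
  intros Hp _ _ _ _ [c [Hc Hnc]] A _ Hlin.
  destruct (Hlin c Hc) as [y [_ [Hy Hlim]]].
  apply Hnc.
  assert (Heq : forall k, c k = y k).
  { intro k.
    assert (Hb : forall N, (k < N)%nat ->
              pabs p (c k - y k) <= lp_dist p (lincomb N c unit_vec) y).
    { intros N HN. unfold lp_dist, lp_norm.
      assert (Hex : ex_series (fun n => pabs p (lincomb N c unit_vec n - y n))).
      { apply (ex_series_incr_n _ N).
        apply (ex_series_incr_n _ N) in Hy.
        eapply ex_series_ext; [|exact Hy].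
        intro n. simpl. rewrite lincomb_unit.
        destruct (Nat.ltb_spec (N + n) N); [lia|].
        rewrite Rminus_0_l, pabs_opp. reflexivity. }
      pose proof (term_le_series _ (fun n => pabs_nonneg p _) Hex k) as T.
      simpl in T. rewrite lincomb_unit in T.
      destruct (Nat.ltb_spec k N); [exact T|lia]. }
    assert (Hle : Rbar_le (pabs p (c k - y k)) 0).
    { eapply is_lim_seq_le_loc; [| apply is_lim_seq_const | exact Hlim].
      exists (Datatypes.S k). intros N HN. apply Hb. lia. }
    simpl in Hle. pose proof (pabs_nonneg p (c k - y k)).
    assert (pabs p (c k - y k) = 0) by lra.
    apply pabs_zero in H0. lra. }
  unfold in_c0. eapply is_lim_seq_ext; [|apply (lp_lim0 p y); [lra|exact Hy]].
  intro n. symmetry. apply Heq.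
Qed.
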